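(* Let $k\ge 1$. (i) For any $i\in\{1,\dots,k\}$, if a language $L$ is recognized by some $\mathrm{rtDVA}(k)^i_1$, then $L$ is recognized by some $\mathrm{rtDVA}(k)$. (ii) For any $c\in\mathbb{Q}$, if a language $L$ is recognized by some $\mathrm{rtDVA}(k)^1_c$, then $L$ is recognized by some $\mathrm{rtDVA}(k+1)$.
   Context: A real-time deterministic vector automaton of dimension $k$ ($\mathrm{rtDVA}(k)$) is a 6-tuple $\mathcal{V}=(Q,\Sigma,\delta,q_0,Q_a,v)$ where $Q$ is a finite set of states, $q_0\in Q$ the initial state, $Q_a\subseteq Q$ the accept states, $\Sigma$ the input alphabet, $v\in\mathbb{Q}^k$ an initial row vector (freely chosen by the designer), and $\delta:Q\times(\Sigma\cup\{\cent,\$\})\times\{=,\neq\}\to Q\times S$, where $S$ is the set of $k\times k$ rational matrices. On input $w$, the machine reads $\cent w\$$ from left to right, one symbol per step, starting in $q_0$ with vector $v$. If it is in state $q$, reads symbol $\sigma$, and $\omega$ is ''$=$'' iff the first entry of the current vector equals $1$ (and ''$\neq$'' otherwise), and $\delta(q,\sigma,\omega)=(q',M)$, it moves to $q'$ and replaces the current row vector $x$ by $xM$. The input is accepted iff after processing $\$$ the state is in $Q_a$ and the first entry of the vector equals $1$. For $i\in\{1,\dots,k\}$ and $c\in\mathbb{Q}$, an $\mathrm{rtDVA}(k)^i_c$ is defined identically except that every test (both the value $\omega$ used in transitions and the final acceptance test) checks whether the $i$-th entry of the vector equals $c$ instead of whether the first entry equals $1$. *)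

(* Defs.v *)
From HB Require Import structures.
From mathcomp Require Import all_boot all_order all_algebra.
Set Implicit Arguments. Unset Strict Implicit. Unset Printing Implicit Defensive.
Import Order.TTheory GRing.Theory Num.Theory.
Local Open Scope ring_scope.

Inductive tsym (S : Type) := Cent | Dollar | Letter of S.
Arguments Cent {S}. Arguments Dollar {S}. Arguments Letter {S} _.

(* The boolean argument of delta is omega: true means "=" (the tested
   entry equals the tested constant), false means "<>". *)
Record rtDVA (Q S : finType) (k : nat) := RtDVA {
  q0 : Q;
  acc : pred Q;
  v0 : 'rV[rat]_k;
  delta : Q -> tsym S -> bool -> Q * 'M[rat]_k
}.

Definition step (Q S : finType) (k : nat) (V : rtDVA Q S k)
  (i : 'I_k) (c : rat) (cfg : Q * 'rV[rat]_k) (a : tsym S) :=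
  let: (q, x) := cfg in
  let: (q', M) := delta V q a (x 0 i == c) in (q', x *m M).

Definition run (Q S : finType) (k : nat) (V : rtDVA Q S k)
  (i : 'I_k) (c : rat) (w : seq S) : Q * 'rV[rat]_k :=
  foldl (step V i c) (q0 V, v0 V) (Cent :: map Letter w ++ [:: Dollar]).

Definition accepts_ic (Q S : finType) (k : nat) (V : rtDVA Q S k)
  (i : 'I_k) (c : rat) (w : seq S) : bool :=
  let: (q, x) := run V i c w in acc V q && (x 0 i == c).

Definition recognized_ic (S : finType) (k : nat) (i : 'I_k) (c : rat)
  (L : seq S -> Prop) : Prop :=
  exists (Q : finType) (V : rtDVA Q S k),
    forall w, L w <-> accepts_ic V i c w.

(* Language recognized by some rtDVA(k) (test: first entry equals 1);
   defined only for k >= 1, written as k.+1. *)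
Definition recognized (S : finType) (k : nat) (L : seq S -> Prop) : Prop :=
  @recognized_ic S k.+1 ord0 1 L.

(* Main.v *)
Require Import Defs.
From mathcomp Require Import all_boot all_order all_algebra all_fingroup.
Local Open Scope ring_scope.
Import GRing.Theory.

Section Sim.
Variables (Q S : finType) (n m : nat) (V : rtDVA Q S n) (i : 'I_n) (c : rat)
  (i' : 'I_m) (c' : rat) (f : 'rV[rat]_n -> 'rV[rat]_m) (g : 'M[rat]_n -> 'M[rat]_m).
Hypothesis fg : forall x M, f (x *m M) = f x *m g M.
Hypothesis ft : forall x, (f x 0 i' == c') = (x 0 i == c).

Definition simV : rtDVA Q S m :=
  RtDVA (q0 V) (acc V) (f (v0 V))
    (fun q a b => let: (q', M) := delta V q a b in (q', g M)).

Lemma sim_fold s q x :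
  foldl (step simV i' c') (q, f x) s =
  let: (q', y) := foldl (step V i c) (q, x) s in (q', f y).
Proof.
elim: s q x => [|a s IH] q x //=.
rewrite /step /= ft; case: (delta V q a (x 0 i == c)) => q' M.
by rewrite -fg IH.
Qed.

Lemma sim_acc w : accepts_ic simV i' c' w = accepts_ic V i c w.
Proof.
rewrite /accepts_ic /run. rewrite [q0 simV]/= [v0 simV]/= [acc simV]/= sim_fold.
by case: foldl => q y; rewrite ft.
Qed.
End Sim.


Lemma part1 (S : finType) (k : nat) (i : 'I_k.+1) (L : seq S -> Prop) :
  recognized_ic i 1 L -> recognized k L.
Proof.
move=> [Q [V HV]]; exists Q.
pose P : 'M[rat]_k.+1 := tperm_mx (ord0 : 'I_k.+1) i.
have PP : P *m P = 1%:M.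
  by rewrite /P /tperm_mx -perm_mxM tperm2 perm_mx1.
exists (@simV _ _ _ _ V (fun x => x *m P) (fun M => P *m M *m P)) => w.
rewrite (sim_acc _ _ _ _ _ i 1); [exact: HV| |].
  move=> x M; by rewrite !mulmxA -(mulmxA x P P) PP mulmx1.
by move=> x; rewrite /P -xcolE !mxE tpermL.
Qed.

Lemma part2 (S : finType) (k : nat) (c : rat) (L : seq S -> Prop) :
  recognized_ic (ord0 : 'I_k.+1) c L -> recognized k.+1 L.
Proof.
move=> [Q [V HV]].
pose d : 'rV[rat]_k.+1 := (1 - c) *: delta_mx 0 ord0.
pose f := fun x : 'rV[rat]_k.+1 => (row_mx (1 : 'M[rat]_1) (x + d) : 'rV[rat]_(k.+2)).
pose g := fun M : 'M[rat]_k.+1 =>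
  (block_mx (1 : 'M[rat]_1) (d - d *m M) 0 M : 'M[rat]_(k.+2)).
apply: (@part1 S k.+1 (rshift 1 (ord0 : 'I_k.+1))).
exists Q, (@simV _ _ _ _ V f g) => w.
rewrite (sim_acc _ _ _ _ _ ord0 c); [exact: HV| |].
  move=> x M; rewrite /f /g.
  have -> := (mul_row_block (1 : 'M[rat]_1) (x + d) 1 (d - d *m M) 0 M).
  rewrite mulmx0 mul1mx addr0 mulmxDl mul1mx.
  by rewrite [in RHS]addrC -addrA [d *m M + _]addrC subrK.
move=> x; rewrite /f.
have -> := (row_mxEr (1 : 'M[rat]_1) (x + d) 0 ord0).
by rewrite !mxE /= mulr1 addrA addrAC -[X in _ == X](add0r 1) (inj_eq (addIr 1)) subr_eq0.
Qed.

Theorem theorem1 (S : finType) (k : nat) :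
  (forall (i : 'I_k.+1) (L : seq S -> Prop),
      recognized_ic i 1 L -> recognized k L) /\
  (forall (c : rat) (L : seq S -> Prop),
      recognized_ic (ord0 : 'I_k.+1) c L -> recognized k.+1 L).
Proof.
split; [exact: part1 | exact: part2].
Qed.
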